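(* For terms $M_1,M_2$ of the CCV $\lambda\mu$-calculus, if $[\![M_1]\!]=[\![M_2]\!]$ up to $\beta\eta$-equality in the target calculus, then $M_1=_{ccv}M_2$.
   Context: CCV $\lambda\mu$-calculus. Ordinary variables $x,y,z,\dots$ and continuation variables $k,l,\dots$ are disjoint. Terms $M ::= x \mid \lambda x.M \mid MM \mid (M\ \mathsf{where}\ x:=M) \mid \mu k.J$, jumps $J ::= [k]M \mid (J\ \mathsf{where}\ x:=M)$, where $(L\ \mathsf{where}\ x:=M)$ means $\mathsf{let}\ x=M\ \mathsf{in}\ L$ ($x$ bound in $L$ only). Terms are identified up to $\alpha$-conversion and the congruence generated by (E1) $(L\ \mathsf{where}\ x:=(M\ \mathsf{where}\ y:=N))=((L\ \mathsf{where}\ x:=M)\ \mathsf{where}\ y:=N)$ if $y$ not free in $L$; (E2) $((\mu k.J)\ \mathsf{where}\ x:=M)=\mu k.(J\ \mathsf{where}\ x:=M)$ if $k$ not free in $M$; (E3) $[k](L\ \mathsf{where}\ x:=M)=([k]L\ \mathsf{where}\ x:=M)$. Values $V$: variables and $\lambda$-abstractions; $N$ a non-value. $=_{ccv}$ is the smallest congruence containing ($z$ fresh): $NM\to(zM\ \mathsf{where}\ z:=N)$; $VN\to(Vz\ \mathsf{where}\ z:=N)$; $(\lambda x.M)V\to(M\ \mathsf{where}\ x:=V)$; $(M\ \mathsf{where}\ x:=V)\to M\{V/x\}$; $(M\ \mathsf{where}\ x:=\mu k.J)\to\mu k.J\{[k]\square\mapsto[k](M\ \mathsf{where}\ x:=\square)\}$;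 $[l]\mu k.J\to J\{l/k\}$; $\lambda x.Vx\to V$ ($x$ not free in $V$); $(x\ \mathsf{where}\ x:=M)\to M$; $\mu k.[k]M\to M$ ($k$ not free in $M$); the context substitution replaces recursively each subjump $[k]Q$ with $k$ free by $[k](M\ \mathsf{where}\ x:=Q)$, and $J\{l/k\}$ replaces each such $[k]Q$ by $[l]Q$. Target calculus: sorted $\lambda$-calculus $T::=\lambda k.Q\mid WW$, $Q::=KW\mid TK$, $W::=x\mid\lambda x.T$, $K::=k\mid\lambda x.Q$ with $\beta\eta$. CPS translation (fresh bound variables): $\langle V\rangle[K]=KV^*$; $\langle V_1V_2\rangle[K]=V_1^*V_2^*K$; $\langle VN\rangle[K]=\langle N\rangle[\lambda y.V^*yK]$; $\langle NV\rangle[K]=\langle N\rangle[\lambda x.xV^*K]$; $\langle N_1N_2\rangle[K]=\langle N_1\rangle[\lambda x.\langle N_2\rangle[\lambda y.xyK]]$; $\langle (L\ \mathsf{where}\ x:=M)\rangle[K]=\langle M\rangle[\lambda x.\langle L\rangle[K]]$ (renaming $x$ if free in $K$); $\langle\mu k.J\rangle[K]=(\lambda k.\langle J\rangle)K$; $\langle[k]M\rangle=\langle M\rangle[k]$; $\langle (J\ \mathsf{where}\ x:=M)\rangle=\langle M\rangle[\lambda x.\langle J\rangle]$; $x^*=x$; $(\lambda x.M)^*=\lambda xk.\langle M\rangle[k]$; $[\![M]\!]=\lambda k.\langle M\rangle[k]$, computed from any syntax-tree representative. *)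

(* Defs.v *)
(* CCV lambda-mu calculus with de Bruijn indices (two separate
   index spaces: ordinary variables and continuation variables), its CPS
   translation into the (untyped) lambda-calculus, and beta-eta equality. *)
From Stdlib Require Import Arith.

Definition scons {A : Type} (a : A) (f : nat -> A) (n : nat) : A :=
  match n with 0 => a | S m => f m end.

Definition uprn (xi : nat -> nat) : nat -> nat := scons 0 (fun m => S (xi m)).

(* Var n : ordinary variable (de Bruijn index among ordinary binders)
   Lam M : lambda x. M   (binds ordinary index 0 in M)
   Where L M : (L where x := M)  (x bound in L only, index 0)
   Mu J : mu k. J  (binds continuation index 0 in J)
   Jmp k M : [k] M
   JWhere J M : (J where x := M) *)
Inductive term : Type :=
| Var : nat -> term
| Lam : term -> term
| App : term -> term -> term
| Where : term -> term -> term
| Mu : jump -> term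
with jump : Type :=
| Jmp : nat -> term -> jump
| JWhere : jump -> term -> jump.

Definition is_value (M : term) : bool :=
  match M with Var _ | Lam _ => true | _ => false end.

Fixpoint ren_o (xi : nat -> nat) (M : term) : term :=
  match M with
  | Var n => Var (xi n)
  | Lam B => Lam (ren_o (uprn xi) B)
  | App A B => App (ren_o xi A) (ren_o xi B)
  | Where L N => Where (ren_o (uprn xi) L) (ren_o xi N)
  | Mu J => Mu (ren_oj xi J)
  end
with ren_oj (xi : nat -> nat) (J : jump) : jump :=
  match J with
  | Jmp k N => Jmp k (ren_o xi N)
  | JWhere J' N => JWhere (ren_oj (uprn xi) J') (ren_o xi N)
  end.

Fixpoint ren_k (xi : nat -> nat) (M : term) : term :=
  match M with
  | Var n => Var n
  | Lam B => Lam (ren_k xi B)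
  | App A B => App (ren_k xi A) (ren_k xi B)
  | Where L N => Where (ren_k xi L) (ren_k xi N)
  | Mu J => Mu (ren_kj (uprn xi) J)
  end
with ren_kj (xi : nat -> nat) (J : jump) : jump :=
  match J with
  | Jmp k N => Jmp (xi k) (ren_k xi N)
  | JWhere J' N => JWhere (ren_kj xi J') (ren_k xi N)
  end.

Definition up_o (sigma : nat -> term) : nat -> term :=
  scons (Var 0) (fun n => ren_o S (sigma n)).

Fixpoint sub_o (sigma : nat -> term) (M : term) : term :=
  match M with
  | Var n => sigma n
  | Lam B => Lam (sub_o (up_o sigma) B)
  | App A B => App (sub_o sigma A) (sub_o sigma B)
  | Where L N => Where (sub_o (up_o sigma) L) (sub_o sigma N)
  | Mu J => Mu (sub_oj (fun n => ren_k S (sigma n)) J)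
  end
with sub_oj (sigma : nat -> term) (J : jump) : jump :=
  match J with
  | Jmp k N => Jmp k (sub_o sigma N)
  | JWhere J' N => JWhere (sub_oj (up_o sigma) J') (sub_o sigma N)
  end.

(* context substitution J{[k]□ ↦ [k](M where x := □)}: here k is the current
   de Bruijn index of the continuation variable, and M has the ordinary
   variable x free as index 0. Applied recursively inside Q. *)
Fixpoint csub (k : nat) (M : term) (t : term) : term :=
  match t with
  | Var n => Var n
  | Lam B => Lam (csub k (ren_o (uprn S) M) B)
  | App A B => App (csub k M A) (csub k M B)
  | Where L N => Where (csub k (ren_o (uprn S) M) L) (csub k M N)
  | Mu J => Mu (csubj (S k) (ren_k S M) J)
  end
with csubj (k : nat) (M : term) (J : jump) : jump :=
  match J with
  | Jmp l Q =>
      if Nat.eqb l k then Jmp l (Where M (csub k M Q)) else Jmp l (csub k M Q)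
  | JWhere J' N => JWhere (csubj k (ren_o (uprn S) M) J') (csub k M N)
  end.

(* =_ccv : smallest congruence containing the structural equations (E1)-(E3)
   (terms are identified up to these) and the CCV rules. *)
Inductive ccv_eq : term -> term -> Prop :=
| ccv_refl M : ccv_eq M M
| ccv_sym M N : ccv_eq M N -> ccv_eq N M
| ccv_trans M N P : ccv_eq M N -> ccv_eq N P -> ccv_eq M P
| ccv_Lam M M' : ccv_eq M M' -> ccv_eq (Lam M) (Lam M')
| ccv_App M M' N N' : ccv_eq M M' -> ccv_eq N N' -> ccv_eq (App M N) (App M' N')
| ccv_Where L L' M M' : ccv_eq L L' -> ccv_eq M M' -> ccv_eq (Where L M) (Where L' M')
| ccv_Mu J J' : ccvj_eq J J' -> ccv_eq (Mu J) (Mu J')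
| ccv_E1 L M N :
    ccv_eq (Where L (Where M N)) (Where (Where (ren_o (uprn S) L) M) N)
| ccv_E2 J M : ccv_eq (Where (Mu J) M) (Mu (JWhere J (ren_k S M)))
(* NM -> (zM where z := N) *)
| ccv_appL N M : is_value N = false ->
    ccv_eq (App N M) (Where (App (Var 0) (ren_o S M)) N)
(* VN -> (Vz where z := N) *)
| ccv_appR V N : is_value V = true -> is_value N = false ->
    ccv_eq (App V N) (Where (App (ren_o S V) (Var 0)) N)
(* (lambda x. M) V -> (M where x := V) *)
| ccv_beta M V : is_value V = true -> ccv_eq (App (Lam M) V) (Where M V)
(* (M where x := V) -> M{V/x} *)
| ccv_let M V : is_value V = true -> ccv_eq (Where M V) (sub_o (scons V Var) M)
(* (M where x := mu k. J) -> mu k. J{[k]□ ↦ [k](M where x := □)} *)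
| ccv_letmu M J : ccv_eq (Where M (Mu J)) (Mu (csubj 0 (ren_k S M) J))
(* lambda x. V x -> V *)
| ccv_eta V : is_value V = true -> ccv_eq (Lam (App (ren_o S V) (Var 0))) V
(* (x where x := M) -> M *)
| ccv_letid M : ccv_eq (Where (Var 0) M) M
(* mu k. [k] M -> M *)
| ccv_mueta M : ccv_eq (Mu (Jmp 0 (ren_k S M))) M
with ccvj_eq : jump -> jump -> Prop :=
| ccvj_refl J : ccvj_eq J J
| ccvj_sym J J' : ccvj_eq J J' -> ccvj_eq J' J
| ccvj_trans J1 J2 J3 : ccvj_eq J1 J2 -> ccvj_eq J2 J3 -> ccvj_eq J1 J3
| ccvj_Jmp k M M' : ccv_eq M M' -> ccvj_eq (Jmp k M) (Jmp k M')
| ccvj_JWhere J J' M M' : ccvj_eq J J' -> ccv_eq M M' ->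
    ccvj_eq (JWhere J M) (JWhere J' M')
| ccvj_E1 J M N :
    ccvj_eq (JWhere J (Where M N)) (JWhere (JWhere (ren_oj (uprn S) J) M) N)
| ccvj_E3 k L M : ccvj_eq (Jmp k (Where L M)) (JWhere (Jmp k L) M)
(* [l] mu k. J -> J{l/k} *)
| ccvj_mu l J : ccvj_eq (Jmp l (Mu J)) (ren_kj (scons l (fun n => n)) J).

Inductive tm : Type :=
| tvar : nat -> tm
| tlam : tm -> tm
| tapp : tm -> tm -> tm.

Fixpoint tren (xi : nat -> nat) (t : tm) : tm :=
  match t with
  | tvar n => tvar (xi n)
  | tlam b => tlam (tren (uprn xi) b)
  | tapp a b => tapp (tren xi a) (tren xi b)
  end.

Definition tup (sigma : nat -> tm) : nat -> tm :=
  scons (tvar 0) (fun n => tren S (sigma n)).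

Fixpoint tsub (sigma : nat -> tm) (t : tm) : tm :=
  match t with
  | tvar n => sigma n
  | tlam b => tlam (tsub (tup sigma) b)
  | tapp a b => tapp (tsub sigma a) (tsub sigma b)
  end.

Inductive beta_eta : tm -> tm -> Prop :=
| be_refl t : beta_eta t t
| be_sym t u : beta_eta t u -> beta_eta u t
| be_trans t u v : beta_eta t u -> beta_eta u v -> beta_eta t v
| be_lam t u : beta_eta t u -> beta_eta (tlam t) (tlam u)
| be_app t t' u u' : beta_eta t t' -> beta_eta u u' -> beta_eta (tapp t u) (tapp t' u')
| be_beta b a : beta_eta (tapp (tlam b) a) (tsub (scons a tvar) b)
| be_eta t : beta_eta (tlam (tapp (tren S t) (tvar 0))) t.

Definition sh (e : nat -> tm) : nat -> tm := fun n => tren S (e n).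

(* tr eo ek M K = <M>[K]; eo / ek give the target variables for the free
   ordinary / continuation variables of M; star eo ek V = Some V* for a value
   V, None for a non-value; trj eo ek J = <J>. *)
Fixpoint tr (eo ek : nat -> tm) (M : term) (K : tm) {struct M} : tm :=
  match M with
  | Var n => tapp K (eo n)
  | Lam B => tapp K (tlam (tlam (tr (sh (scons (tvar 0) (sh eo))) (sh (sh ek)) B (tvar 0))))
  | App M1 M2 =>
      match star eo ek M1, star eo ek M2 with
      | Some v1, Some v2 => tapp (tapp v1 v2) K
      | Some v1, None =>
          tr eo ek M2 (tlam (tapp (tapp (tren S v1) (tvar 0)) (tren S K)))
      | None, Some v2 =>
          tr eo ek M1 (tlam (tapp (tapp (tvar 0) (tren S v2)) (tren S K)))
      | None, None =>
          tr eo ek M1 (tlam (tr (sh eo) (sh ek) M2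
                (tlam (tapp (tapp (tvar 1) (tvar 0)) (tren S (tren S K))))))
      end
  | Where L N => tr eo ek N (tlam (tr (scons (tvar 0) (sh eo)) (sh ek) L (tren S K)))
  | Mu J => tapp (tlam (trj (sh eo) (scons (tvar 0) (sh ek)) J)) K
  end
with star (eo ek : nat -> tm) (V : term) {struct V} : option tm :=
  match V with
  | Var n => Some (eo n)
  | Lam B => Some (tlam (tlam (tr (sh (scons (tvar 0) (sh eo))) (sh (sh ek)) B (tvar 0))))
  | _ => None
  end
with trj (eo ek : nat -> tm) (J : jump) {struct J} : tm :=
  match J with
  | Jmp k N => tr eo ek N (ek k)
  | JWhere J' N => tr eo ek N (tlam (trj (scons (tvar 0) (sh eo)) (sh ek) J'))
  end.

(* [[M]] = lambda k. <M>[k]; free ordinary variable i of M is the target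
   variable 2i, free continuation variable j is the target variable 2j+1. *)
Definition cps (M : term) : tm :=
  tlam (tr (sh (fun n => tvar (2 * n))) (sh (fun n => tvar (2 * n + 1))) M (tvar 0)).

(* Main.v *)
Require Import Defs.
From Stdlib Require Import Arith Lia FunctionalExtensionality.

Ltac fext := apply functional_extensionality; intro.

Lemma uprn_comp xi zeta : (fun n => uprn xi (uprn zeta n)) = uprn (fun n => xi (zeta n)).
Proof. fext. destruct x; reflexivity. Qed.

Lemma uprn_id : uprn (fun n => n) = (fun n => n).
Proof. fext; destruct x; reflexivity. Qed.

Lemma tren_tren t : forall xi zeta, tren xi (tren zeta t) = tren (fun n => xi (zeta n)) t.
Proof. induction t; intros; simpl; f_equal; auto. rewrite IHt, uprn_comp; reflexivity. Qed.

Lemma tren_id t : tren (fun n => n) t = t.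
Proof. induction t; simpl; f_equal; auto. rewrite uprn_id; auto. Qed.

Lemma tup_ren xi : tup (fun n => tvar (xi n)) = (fun n => tvar (uprn xi n)).
Proof. fext; destruct x; reflexivity. Qed.

Lemma tren_as_tsub t : forall xi, tren xi t = tsub (fun n => tvar (xi n)) t.
Proof. induction t; intros; simpl; f_equal; auto. rewrite IHt, tup_ren; auto. Qed.

Lemma tsub_tren t : forall sigma xi, tsub sigma (tren xi t) = tsub (fun n => sigma (xi n)) t.
Proof. induction t; intros; simpl; f_equal; auto. rewrite IHt. f_equal. fext; destruct x; reflexivity. Qed.

Lemma tren_tsub t : forall sigma xi, tren xi (tsub sigma t) = tsub (fun n => tren xi (sigma n)) t.
Proof. induction t; intros; simpl; f_equal; auto. rewrite IHt. f_equal. fext; destruct x; simpl; auto.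
  rewrite !tren_tren. reflexivity. Qed.

Lemma tsub_tsub t : forall sigma tau, tsub sigma (tsub tau t) = tsub (fun n => tsub sigma (tau n)) t.
Proof. induction t; intros; simpl; f_equal; auto. rewrite IHt. f_equal. fext; destruct x; simpl; auto.
  rewrite tsub_tren, tren_tsub. reflexivity. Qed.

Lemma tup_id : tup tvar = tvar.
Proof. fext; destruct x; reflexivity. Qed.

Lemma tsub_id t : tsub tvar t = t.
Proof. induction t; simpl; f_equal; auto. rewrite tup_id; auto. Qed.

Lemma tsub_beta sigma a b : tsub sigma (tsub (scons a tvar) b) = tsub (scons (tsub sigma a) tvar) (tsub (tup sigma) b).
Proof. rewrite !tsub_tsub. f_equal. fext; destruct x; simpl; auto.
  rewrite tsub_tren. simpl. rewrite tsub_id. reflexivity. Qed.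

Lemma tren_beta xi a b : tren xi (tsub (scons a tvar) b) = tsub (scons (tren xi a) tvar) (tren (uprn xi) b).
Proof. rewrite !tren_as_tsub, tsub_beta. f_equal. rewrite tup_ren; auto. Qed.

Lemma tren_S_inj t u : tren S t = tren S u -> t = u.
Proof. intros H. apply (f_equal (tren pred)) in H. rewrite !tren_tren in H. simpl in H.
  rewrite !tren_id in H. auto. Qed.

Inductive rstar (R : tm -> tm -> Prop) : tm -> tm -> Prop :=
| star_refl t : rstar R t t
| star_step t u v : R t u -> rstar R u v -> rstar R t v.

Lemma star_trans R t u v : rstar R t u -> rstar R u v -> rstar R t v.
Proof. induction 1; intros; auto. eapply star_step; eauto. Qed.

Lemma star_one (R : tm -> tm -> Prop) t u : R t u -> rstar R t u.
Proof. intros; eapply star_step; eauto. apply star_refl. Qed.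

Lemma star_map (R R' : tm -> tm -> Prop) (f : tm -> tm) :
  (forall t u, R t u -> R' (f t) (f u)) -> forall t u, rstar R t u -> rstar R' (f t) (f u).
Proof. induction 2. apply star_refl. eapply star_step; eauto. Qed.

Lemma star_mono (R R' : tm -> tm -> Prop) :
  (forall t u, R t u -> rstar R' t u) -> forall t u, rstar R t u -> rstar R' t u.
Proof. induction 2. apply star_refl. eapply star_trans; eauto. Qed.

Definition diamond (R : tm -> tm -> Prop) :=
  forall t u v, R t u -> R t v -> exists w, R u w /\ R v w.

Lemma strip R : diamond R -> forall t u v, rstar R t u -> R t v -> exists w, R u w /\ rstar R v w.
Proof. intros D t u v H. revert v. induction H; intros.
  - exists v; split; auto. apply star_refl.
  - destruct (D _ _ _ H H1) as [w1 [A B]]. destruct (IHrstar _ A) as [w [C E]].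
    exists w; split; auto. eapply star_step; eauto. Qed.

Lemma diamond_star R : diamond R -> diamond (rstar R).
Proof. intros D t u v H. revert v. induction H; intros.
  - exists v; split; auto. apply star_refl.
  - destruct (strip R D _ _ _ H1 H) as [w1 [A B]]. destruct (IHrstar _ B) as [w [C E]].
    exists w; split; auto. eapply star_step; eauto. Qed.

Inductive bs : tm -> tm -> Prop :=
| bs_beta b a : bs (tapp (tlam b) a) (tsub (scons a tvar) b)
| bs_lam b b' : bs b b' -> bs (tlam b) (tlam b')
| bs_appl a a' c : bs a a' -> bs (tapp a c) (tapp a' c)
| bs_appr a c c' : bs c c' -> bs (tapp a c) (tapp a c').

Inductive es : tm -> tm -> Prop :=
| es_eta t : es (tlam (tapp (tren S t) (tvar 0))) t
| es_lam b b' : es b b' -> es (tlam b) (tlam b')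
| es_appl a a' c : es a a' -> es (tapp a c) (tapp a' c)
| es_appr a c c' : es c c' -> es (tapp a c) (tapp a c').

Inductive pb : tm -> tm -> Prop :=
| pb_var n : pb (tvar n) (tvar n)
| pb_lam b b' : pb b b' -> pb (tlam b) (tlam b')
| pb_app a a' c c' : pb a a' -> pb c c' -> pb (tapp a c) (tapp a' c')
| pb_beta b b' a a' : pb b b' -> pb a a' -> pb (tapp (tlam b) a) (tsub (scons a' tvar) b').

Lemma pb_refl t : pb t t.
Proof. induction t; constructor; auto. Qed.

Lemma pb_ren t t' : pb t t' -> forall xi, pb (tren xi t) (tren xi t').
Proof. induction 1; intros; simpl; try constructor; auto.
  rewrite tren_beta. constructor; auto. Qed.

Lemma pb_subst t t' : pb t t' -> forall sigma sigma', (forall n, pb (sigma n) (sigma' n)) ->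
  pb (tsub sigma t) (tsub sigma' t').
Proof. induction 1; intros; simpl; auto.
  - constructor. apply IHpb. intros [|n]; simpl. constructor. apply pb_ren; auto.
  - constructor; auto.
  - rewrite tsub_beta. constructor; auto. apply IHpb1. intros [|n]; simpl. constructor. apply pb_ren; auto.
Qed.

Fixpoint cd (t : tm) : tm :=
  match t with
  | tvar n => tvar n
  | tlam b => tlam (cd b)
  | tapp a c => match a with
                | tlam b => tsub (scons (cd c) tvar) (cd b)
                | _ => tapp (cd a) (cd c)
                end
  end.

Lemma pb_tri t u : pb t u -> pb u (cd t).
Proof. induction 1; simpl.
  - constructor.
  - constructor; auto.
  - destruct a; simpl in *; try (constructor; auto; fail).
    inversion H; subst. inversion IHpb1; subst. constructor; auto.
  - apply pb_subst; auto. intros [|n]; simpl; auto. constructor. Qed.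

Lemma pb_diamond : diamond pb.
Proof. intros t u v H1 H2. exists (cd t); split; apply pb_tri; auto. Qed.

Lemma star_bs_lam b b' : rstar bs b b' -> rstar bs (tlam b) (tlam b').
Proof. apply (star_map bs bs (tlam)). intros; constructor; auto. Qed.
Lemma star_bs_appl a a' c : rstar bs a a' -> rstar bs (tapp a c) (tapp a' c).
Proof. apply (star_map bs bs (fun x => tapp x c)). intros; constructor; auto. Qed.
Lemma star_bs_appr a c c' : rstar bs c c' -> rstar bs (tapp a c) (tapp a c').
Proof. apply (star_map bs bs (fun x => tapp a x)). intros; constructor; auto. Qed.

Lemma pb_star t u : pb t u -> rstar bs t u.
Proof. induction 1.
  - apply star_refl.
  - apply star_bs_lam; auto.
  - eapply star_trans. apply star_bs_appl; eauto. apply star_bs_appr; auto.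
  - eapply star_trans. apply star_bs_appl. apply star_bs_lam. eauto.
    eapply star_trans. apply star_bs_appr; eauto. apply star_one. constructor. Qed.

Lemma bs_pb t u : bs t u -> pb t u.
Proof. induction 1; constructor; auto using pb_refl. Qed.

Lemma bs_confluent : diamond (rstar bs).
Proof. intros t u v H1 H2.
  assert (A : forall x y, rstar bs x y -> rstar pb x y).
  { apply star_mono. intros; apply star_one, bs_pb; auto. }
  assert (B : forall x y, rstar pb x y -> rstar bs x y).
  { apply star_mono. apply pb_star. }
  destruct (diamond_star pb pb_diamond _ _ _ (A _ _ H1) (A _ _ H2)) as [w [C D]].
  exists w; split; apply B; auto. Qed.

Fixpoint occ (n : nat) (t : tm) : bool :=
  match t with
  | tvar m => Nat.eqb m n
  | tlam b => occ (S n) b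
  | tapp a b => occ n a || occ n b
  end.

Lemma tren_agree t : forall xi zeta, (forall n, occ n t = true -> xi n = zeta n) -> tren xi t = tren zeta t.
Proof. induction t; intros xi zeta H; simpl in *.
  - f_equal. apply H. apply Nat.eqb_refl.
  - f_equal. apply IHt. intros [|m] Hm; simpl; auto.
  - f_equal; [apply IHt1 | apply IHt2]; intros m Hm; apply H; rewrite Hm; auto.
    apply Bool.orb_true_r. Qed.

Lemma occ_tren_fwd t : forall xi m, occ m t = true -> occ (xi m) (tren xi t) = true.
Proof. induction t; intros xi m H; simpl in *.
  - apply Nat.eqb_eq in H; subst. apply Nat.eqb_refl.
  - apply (IHt (uprn xi) (S m)) in H. simpl in H. auto.
  - apply Bool.orb_true_iff in H; destruct H as [H|H]; [rewrite IHt1 | rewrite IHt2]; auto.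
    apply Bool.orb_true_r. Qed.

Lemma occ_tren_bwd t : forall xi n, occ n (tren xi t) = true -> exists m, occ m t = true /\ xi m = n.
Proof. induction t; intros xi m H; simpl in *.
  - apply Nat.eqb_eq in H; subst. exists n; split; auto. apply Nat.eqb_refl.
  - destruct (IHt _ _ H) as [[|k] [A B]]; simpl in B; try discriminate.
    injection B; intros; subst. exists k; split; auto.
  - apply Bool.orb_true_iff in H; destruct H as [H|H];
    [destruct (IHt1 _ _ H) as [k [A B]] | destruct (IHt2 _ _ H) as [k [A B]]];
    exists k; rewrite A; split; auto. apply Bool.orb_true_r. Qed.

Lemma occ0_tren_S t : occ 0 (tren S t) = false.
Proof. destruct (occ 0 (tren S t)) eqn:E; auto. destruct (occ_tren_bwd _ _ _ E) as [m [_ B]]. discriminate. Qed.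

Lemma strengthen s : occ 0 s = false -> s = tren S (tren pred s).
Proof. intros H. rewrite tren_tren. rewrite <- (tren_id s) at 1. apply tren_agree.
  intros [|n] Hn; simpl; auto. congruence. Qed.

Lemma uprn_S_inv xi s t : tren (uprn xi) s = tren S t -> exists s0, s = tren S s0 /\ t = tren xi s0.
Proof. intros H.
  assert (occ 0 s = false).
  { destruct (occ 0 s) eqn:E; auto. apply (occ_tren_fwd _ (uprn xi)) in E. simpl in E.
    rewrite H, occ0_tren_S in E. discriminate. }
  exists (tren pred s). split. apply strengthen; auto.
  apply tren_S_inj. rewrite <- H. rewrite (strengthen s H0) at 1. rewrite !tren_tren. reflexivity. Qed.

Lemma es_ren_inv x y : es x y -> forall xi s, x = tren xi s -> exists s', y = tren xi s' /\ es s s'.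
Proof. induction 1; intros xi s E.
  - destruct s; simpl in E; try discriminate. injection E; intros E'.
    destruct s; simpl in E'; try discriminate. injection E'; intros E2 E1.
    destruct s2; simpl in E2; try discriminate. destruct n; simpl in E2; try discriminate.
    symmetry in E1. destruct (uprn_S_inv _ _ _ E1) as [s0 [A B]]. subst.
    exists s0; split; auto. constructor.
  - destruct s; simpl in E; try discriminate. injection E; intros; subst.
    destruct (IHes _ _ eq_refl) as [s' [A B]]. exists (tlam s'); simpl; subst; split; auto. constructor; auto.
  - destruct s; simpl in E; try discriminate. injection E; intros; subst.
    destruct (IHes _ _ eq_refl) as [s' [A B]]. exists (tapp s' s2); simpl; subst; split; auto. constructor; auto.
  - destruct s; simpl in E; try discriminate. injection E; intros; subst.
    destruct (IHes _ _ eq_refl) as [s' [A B]]. exists (tapp s1 s'); simpl; subst; split; auto. constructor; auto.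
Qed.

Lemma bs_ren_inv x y : bs x y -> forall xi s, x = tren xi s -> exists s', y = tren xi s' /\ bs s s'.
Proof. induction 1; intros xi s E.
  - destruct s; simpl in E; try discriminate. injection E; intros E2 E1.
    destruct s1; simpl in E1; try discriminate. injection E1; intros; subst.
    exists (tsub (scons s2 tvar) s1). rewrite tren_beta. split; auto. constructor.
  - destruct s; simpl in E; try discriminate. injection E; intros; subst.
    destruct (IHbs _ _ eq_refl) as [s' [A B]]. exists (tlam s'); simpl; subst; split; auto. constructor; auto.
  - destruct s; simpl in E; try discriminate. injection E; intros; subst.
    destruct (IHbs _ _ eq_refl) as [s' [A B]]. exists (tapp s' s2); simpl; subst; split; auto. constructor; auto.
  - destruct s; simpl in E; try discriminate. injection E; intros; subst.
    destruct (IHbs _ _ eq_refl) as [s' [A B]]. exists (tapp s1 s'); simpl; subst; split; auto. constructor; auto.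
Qed.

Lemma es_ren t u : es t u -> forall xi, es (tren xi t) (tren xi u).
Proof. induction 1; intros; simpl; try (constructor; auto; fail).
  rewrite tren_tren. replace (fun n => uprn xi (S n)) with (fun n => S (xi n)) by reflexivity.
  rewrite <- tren_tren. constructor. Qed.

Lemma es_subst t u : es t u -> forall sigma, es (tsub sigma t) (tsub sigma u).
Proof. induction 1; intros; simpl; try (constructor; auto; fail).
  rewrite tsub_tren. replace (fun n => tup sigma (S n)) with (fun n => tren S (sigma n)) by reflexivity.
  rewrite <- tren_tsub. constructor. Qed.

Lemma bs_subst t u : bs t u -> forall sigma, bs (tsub sigma t) (tsub sigma u).
Proof. induction 1; intros; simpl; try (constructor; auto; fail).
  rewrite tsub_beta. constructor. Qed.

Lemma star_es_lam b b' : rstar es b b' -> rstar es (tlam b) (tlam b').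
Proof. apply (star_map es es (tlam)). intros; constructor; auto. Qed.
Lemma star_es_appl a a' c : rstar es a a' -> rstar es (tapp a c) (tapp a' c).
Proof. apply (star_map es es (fun x => tapp x c)). intros; constructor; auto. Qed.
Lemma star_es_appr a c c' : rstar es c c' -> rstar es (tapp a c) (tapp a c').
Proof. apply (star_map es es (fun x => tapp a x)). intros; constructor; auto. Qed.

Lemma star_es_ren t u xi : rstar es t u -> rstar es (tren xi t) (tren xi u).
Proof. apply (star_map es es (tren xi)). intros; apply es_ren; auto. Qed.

Lemma star_es_subst t : forall sigma sigma', (forall n, rstar es (sigma n) (sigma' n)) ->
  rstar es (tsub sigma t) (tsub sigma' t).
Proof. induction t; intros; simpl; auto.
  - apply star_es_lam. apply IHt. intros [|n]; simpl. apply star_refl. apply star_es_ren; auto.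
  - eapply star_trans. apply star_es_appl; eauto. apply star_es_appr; eauto. Qed.

Definition esr t u := t = u \/ es t u.

Lemma es_local : diamond esr.
Proof.
  assert (K : forall t u, es t u -> forall v, es t v -> exists w, esr u w /\ esr v w).
  { induction 1; intros v Hv.
    - inversion Hv; subst.
      + apply tren_S_inj in H0; subst. eexists; split; left; reflexivity.
      + inversion H0; subst.
        * match goal with H : es (tren _ _) _ |- _ => destruct (es_ren_inv _ _ H _ _ eq_refl) as [s' [A B]]; subst end.
          exists s'; split; right; auto. constructor.
        * match goal with H : es (tvar _) _ |- _ => inversion H end.
    - inversion Hv; subst.
      + inversion H; subst.
        * match goal with H : es (tren _ _) _ |- _ => destruct (es_ren_inv _ _ H _ _ eq_refl) as [s' [A B]]; subst end.
          exists s'; split; right; auto. constructor.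
        * match goal with H : es (tvar _) _ |- _ => inversion H end.
      + destruct (IHes _ ltac:(eassumption)) as [w [[A|A] [B|B]]]; subst; exists (tlam w); split;
        try (left; reflexivity); right; constructor; auto.
    - inversion Hv; subst.
      + destruct (IHes _ ltac:(eassumption)) as [w [[A|A] [B|B]]]; subst; exists (tapp w c); split;
        try (left; reflexivity); right; constructor; auto.
      + exists (tapp a' c'); split; right; constructor; auto.
    - inversion Hv; subst.
      + exists (tapp a' c'); split; right; constructor; auto.
      + destruct (IHes _ ltac:(eassumption)) as [w [[A|A] [B|B]]]; subst; exists (tapp a w); split;
        try (left; reflexivity); right; constructor; auto. }
  intros t u v [A|A] [B|B]; subst.
  - exists v; split; left; auto.
  - exists v; split; [right; auto | left; auto].
  - exists u; split; [left; auto | right; auto].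
  - apply (K _ _ A _ B).
Qed.

Lemma star_esr_es t u : rstar esr t u <-> rstar es t u.
Proof. split; apply star_mono; intros x y H.
  - destruct H; subst. apply star_refl. apply star_one; auto.
  - apply star_one; right; auto. Qed.

Lemma es_confluent : diamond (rstar es).
Proof. intros t u v H1 H2. apply star_esr_es in H1. apply star_esr_es in H2.
  destruct (diamond_star esr es_local _ _ _ H1 H2) as [w [A B]].
  exists w; split; apply star_esr_es; auto. Qed.

Definition bsr t u := t = u \/ bs t u.

Lemma comm1 t u : bs t u -> forall v, es t v -> exists w, rstar es u w /\ bsr v w.
Proof. induction 1; intros v Hv.
  - inversion Hv; subst.
    + inversion H2; subst.
      * eexists. split; [|left; reflexivity]. simpl. rewrite tsub_tren. simpl. rewrite tsub_id. apply star_refl.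
      * exists (tsub (scons a tvar) b'). split. apply star_one. apply es_subst; auto. right; constructor.
    + exists (tsub (scons c' tvar) b). split. apply star_es_subst. intros [|n]; simpl; auto.
      apply star_one; auto. apply star_refl. right; constructor.
  - inversion Hv; subst.
    + inversion H; subst.
      * match goal with H1 : tlam _ = tren S ?v |- _ => destruct v; simpl in H1; try discriminate;
          injection H1; intros; subst end.
        eexists. split; [|left; reflexivity].
        rewrite tsub_tren. match goal with |- rstar es (tlam (tsub _ ?t0)) _ =>
        replace (tsub (fun n : nat => scons (tvar 0) tvar (uprn S n)) t0) with t0 end.
        apply star_refl. rewrite <- tsub_id at 1. f_equal. fext. destruct x; reflexivity.
      * match goal with H : bs (tren _ _) _ |- _ => destruct (bs_ren_inv _ _ H _ _ eq_refl) as [s' [A B]]; subst end.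
        exists s'. split. apply star_one. constructor. right; auto.
      * match goal with H : bs (tvar _) _ |- _ => inversion H end.
    + destruct (IHbs _ ltac:(eassumption)) as [w [A B]]. exists (tlam w). split. apply star_es_lam; auto.
      destruct B; [left; subst; auto | right; constructor; auto].
  - inversion Hv; subst.
    + destruct (IHbs _ ltac:(eassumption)) as [w [A B]]. exists (tapp w c). split. apply star_es_appl; auto.
      destruct B; [left; subst; auto | right; constructor; auto].
    + exists (tapp a' c'). split. apply star_one; constructor; auto. right; constructor; auto.
  - inversion Hv; subst.
    + exists (tapp a' c'). split. apply star_one; constructor; auto. right; constructor; auto.
    + destruct (IHbs _ ltac:(eassumption)) as [w [A B]]. exists (tapp a w). split. apply star_es_appr; auto.
      destruct B; [left; subst; auto | right; constructor; auto].
Qed.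

Lemma comm2 t v : rstar es t v -> forall u, bs t u -> exists w, rstar es u w /\ bsr v w.
Proof. induction 1; intros u0 Hu.
  - exists u0; split. apply star_refl. right; auto.
  - destruct (comm1 _ _ Hu _ H) as [w1 [A [B|B]]].
    + subst. exists v; split. eapply star_trans; eauto. left; auto.
    + destruct (IHrstar _ B) as [w [C D]]. exists w; split; auto. eapply star_trans; eauto.
Qed.

Lemma comm3 t u : rstar bs t u -> forall v, rstar es t v -> exists w, rstar es u w /\ rstar bs v w.
Proof. induction 1; intros v0 Hv.
  - exists v0; split; auto. apply star_refl.
  - destruct (comm2 _ _ Hv _ H) as [w1 [A B]].
    destruct (IHrstar _ A) as [w [C D]]. exists w; split; auto.
    destruct B; subst; auto. eapply star_step; eauto. Qed.

Definition st t u := bs t u \/ es t u.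
Definition DD t u := exists m, rstar bs t m /\ rstar es m u.

Lemma DD_diamond : diamond DD.
Proof. intros t u v [m1 [A1 B1]] [m2 [A2 B2]].
  destruct (bs_confluent _ _ _ A1 A2) as [m3 [C1 C2]].
  destruct (comm3 _ _ C1 _ B1) as [w1 [D1 E1]].
  destruct (comm3 _ _ C2 _ B2) as [w2 [D2 E2]].
  destruct (es_confluent _ _ _ D1 D2) as [w3 [F1 F2]].
  exists w3; split; [exists w1 | exists w2]; split; auto. Qed.

Lemma st_confluent : diamond (rstar st).
Proof.
  assert (A : forall x y, rstar st x y -> rstar DD x y).
  { apply star_mono. intros x y [H|H]; apply star_one.
    exists y; split; [apply star_one; auto | apply star_refl].
    exists x; split; [apply star_refl | apply star_one; auto]. }
  assert (B : forall x y, rstar DD x y -> rstar st x y).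
  { apply star_mono. intros x y [m [H1 H2]]. eapply star_trans.
    apply (star_mono bs st) ; [intros; apply star_one; left; auto | exact H1].
    apply (star_mono es st) ; [intros; apply star_one; right; auto | exact H2]. }
  intros t u v H1 H2.
  destruct (diamond_star DD DD_diamond _ _ _ (A _ _ H1) (A _ _ H2)) as [w [C D]].
  exists w; split; apply B; auto. Qed.

Lemma star_st_lam b b' : rstar st b b' -> rstar st (tlam b) (tlam b').
Proof. apply (star_map st st (tlam)). intros t u [H|H]; [left|right]; constructor; auto. Qed.
Lemma star_st_appl a a' c : rstar st a a' -> rstar st (tapp a c) (tapp a' c).
Proof. apply (star_map st st (fun x => tapp x c)). intros t u [H|H]; [left|right]; constructor; auto. Qed.
Lemma star_st_appr a c c' : rstar st c c' -> rstar st (tapp a c) (tapp a c').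
Proof. apply (star_map st st (fun x => tapp a x)). intros t u [H|H]; [left|right]; constructor; auto. Qed.

Lemma be_join t u : beta_eta t u -> exists w, rstar st t w /\ rstar st u w.
Proof. induction 1.
  - exists t; split; apply star_refl.
  - destruct IHbeta_eta as [w [A B]]; exists w; auto.
  - destruct IHbeta_eta1 as [w1 [A1 B1]]. destruct IHbeta_eta2 as [w2 [A2 B2]].
    destruct (st_confluent _ _ _ B1 A2) as [w [C D]].
    exists w; split; eapply star_trans; eauto.
  - destruct IHbeta_eta as [w [A B]]; exists (tlam w); split; apply star_st_lam; auto.
  - destruct IHbeta_eta1 as [w1 [A1 B1]]. destruct IHbeta_eta2 as [w2 [A2 B2]].
    exists (tapp w1 w2); split; eapply star_trans;
    try apply star_st_appl; eauto; apply star_st_appr; eauto.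
  - exists (tsub (scons a tvar) b); split. apply star_one; left; constructor. apply star_refl.
  - exists t; split. apply star_one; right; constructor. apply star_refl.
Qed.

Scheme term_mind := Induction for term Sort Prop
  with jump_mind := Induction for jump Sort Prop.
Combined Scheme tj_mind from term_mind, jump_mind.

Lemma ren_o_ren_o :
  (forall M xi zeta, ren_o xi (ren_o zeta M) = ren_o (fun n => xi (zeta n)) M) /\
  (forall J xi zeta, ren_oj xi (ren_oj zeta J) = ren_oj (fun n => xi (zeta n)) J).
Proof. apply tj_mind; intros; simpl; f_equal; auto; rewrite ?H, ?H0, ?uprn_comp; auto. Qed.

Lemma ren_k_ren_k :
  (forall M xi zeta, ren_k xi (ren_k zeta M) = ren_k (fun n => xi (zeta n)) M) /\
  (forall J xi zeta, ren_kj xi (ren_kj zeta J) = ren_kj (fun n => xi (zeta n)) J).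
Proof. apply tj_mind; intros; simpl; f_equal; auto; rewrite ?H, ?H0, ?uprn_comp; auto. Qed.

Lemma ren_o_ren_k :
  (forall M xi zeta, ren_o xi (ren_k zeta M) = ren_k zeta (ren_o xi M)) /\
  (forall J xi zeta, ren_oj xi (ren_kj zeta J) = ren_kj zeta (ren_oj xi J)).
Proof. apply tj_mind; intros; simpl; f_equal; auto. Qed.

Lemma ren_o_id :
  (forall M, ren_o (fun n => n) M = M) /\ (forall J, ren_oj (fun n => n) J = J).
Proof. apply tj_mind; intros; simpl; f_equal; rewrite ?uprn_id; auto. Qed.

Lemma ren_k_id :
  (forall M, ren_k (fun n => n) M = M) /\ (forall J, ren_kj (fun n => n) J = J).
Proof. apply tj_mind; intros; simpl; f_equal; rewrite ?uprn_id; auto. Qed.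

Inductive kctx : Type := KJ : nat -> kctx | KW : jump -> kctx.

Definition fillctx (c : kctx) (M : term) : jump :=
  match c with KJ l => Jmp l M | KW J => JWhere J M end.

Definition kren_o (xi : nat -> nat) (c : kctx) : kctx :=
  match c with KJ l => KJ l | KW J => KW (ren_oj (uprn xi) J) end.
Definition kren_k (xi : nat -> nat) (c : kctx) : kctx :=
  match c with KJ l => KJ (xi l) | KW J => KW (ren_kj xi J) end.

Fixpoint gsub (tau : nat -> term) (rho : nat -> kctx) (M : term) : term :=
  match M with
  | Var n => tau n
  | Lam B => Lam (gsub (up_o tau) (fun j => kren_o S (rho j)) B)
  | App A B => App (gsub tau rho A) (gsub tau rho B)
  | Where L N => Where (gsub (up_o tau) (fun j => kren_o S (rho j)) L) (gsub tau rho N)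
  | Mu J => Mu (gsubj (fun n => ren_k S (tau n)) (scons (KJ 0) (fun j => kren_k S (rho j))) J)
  end
with gsubj (tau : nat -> term) (rho : nat -> kctx) (J : jump) : jump :=
  match J with
  | Jmp k N => fillctx (rho k) (gsub tau rho N)
  | JWhere J' N => JWhere (gsubj (up_o tau) (fun j => kren_o S (rho j)) J') (gsub tau rho N)
  end.

Definition gsubk (tau : nat -> term) (rho : nat -> kctx) (c : kctx) : kctx :=
  match c with KJ l => rho l | KW J => KW (gsubj (up_o tau) (fun j => kren_o S (rho j)) J) end.

Lemma gsub_fill tau rho c M : gsubj tau rho (fillctx c M) = fillctx (gsubk tau rho c) (gsub tau rho M).
Proof. destruct c; reflexivity. Qed.

Lemma up_o_var xi : up_o (fun n => Var (xi n)) = (fun n => Var (uprn xi n)).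
Proof. fext; destruct x; reflexivity. Qed.

Lemma gsub_ren :
  (forall M xo xk, gsub (fun n => Var (xo n)) (fun j => KJ (xk j)) M = ren_o xo (ren_k xk M)) /\
  (forall J xo xk, gsubj (fun n => Var (xo n)) (fun j => KJ (xk j)) J = ren_oj xo (ren_kj xk J)).
Proof. apply tj_mind; intros; simpl; auto; try (f_equal; auto; fail).
  - f_equal. rewrite <- H. rewrite up_o_var. reflexivity.
  - f_equal; auto. rewrite <- H. rewrite up_o_var. reflexivity.
  - f_equal. rewrite <- H. f_equal. fext; destruct x; reflexivity.
  - f_equal; auto. rewrite <- H. rewrite up_o_var. reflexivity.
Qed.

Lemma sub_o_gsub :
  (forall M sigma, sub_o sigma M = gsub sigma (fun j => KJ j) M) /\
  (forall J sigma, sub_oj sigma J = gsubj sigma (fun j => KJ j) J).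
Proof. apply tj_mind; intros; simpl; auto; try (f_equal; auto; fail).
  f_equal. rewrite H. f_equal. fext; destruct x; reflexivity. Qed.

Lemma kren_k_kren_o xi c : kren_k xi (kren_o S c) = kren_o S (kren_k xi c).
Proof. destruct c; simpl; auto. f_equal. symmetry. apply (proj2 ren_o_ren_k). Qed.

Lemma kren_k_kren_k xi zeta c : kren_k xi (kren_k zeta c) = kren_k (fun n => xi (zeta n)) c.
Proof. destruct c; simpl; auto. f_equal. apply (proj2 ren_k_ren_k). Qed.

Lemma ren_k_gsub :
  (forall M xi tau rho, ren_k xi (gsub tau rho M) = gsub (fun n => ren_k xi (tau n)) (fun j => kren_k xi (rho j)) M) /\
  (forall J xi tau rho, ren_kj xi (gsubj tau rho J) = gsubj (fun n => ren_k xi (tau n)) (fun j => kren_k xi (rho j)) J).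
Proof. apply tj_mind; intros; simpl; auto; try (f_equal; auto; fail).
  - f_equal. rewrite H. f_equal. fext; destruct x; simpl; auto. symmetry; apply (proj1 ren_o_ren_k).
    fext. apply kren_k_kren_o.
  - f_equal; auto. rewrite H. f_equal. fext; destruct x; simpl; auto. symmetry; apply (proj1 ren_o_ren_k).
    fext. apply kren_k_kren_o.
  - f_equal. rewrite H. f_equal. fext. rewrite !(proj1 ren_k_ren_k). reflexivity.
    fext; destruct x; simpl; auto. rewrite !kren_k_kren_k. reflexivity.
  - destruct (rho n); simpl; f_equal; auto.
  - f_equal; auto. rewrite H. f_equal. fext; destruct x; simpl; auto. symmetry; apply (proj1 ren_o_ren_k).
    fext. apply kren_k_kren_o.
Qed.

Lemma gsub_ren_k :
  (forall M xi tau rho, gsub tau rho (ren_k xi M) = gsub tau (fun j => rho (xi j)) M) /\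
  (forall J xi tau rho, gsubj tau rho (ren_kj xi J) = gsubj tau (fun j => rho (xi j)) J).
Proof. apply tj_mind; intros; simpl; auto; try (f_equal; auto; fail).
  all: f_equal; try rewrite H; try rewrite H0; try reflexivity; f_equal; fext; destruct x; reflexivity. Qed.

Lemma ccv_eqrefl M N : M = N -> ccv_eq M N.
Proof. intros; subst; constructor. Qed.
Lemma ccvj_eqrefl M N : M = N -> ccvj_eq M N.
Proof. intros; subst; constructor. Qed.

Lemma fill_cong c M M' : ccv_eq M M' -> ccvj_eq (fillctx c M) (fillctx c M').
Proof. destruct c; simpl; intros. apply ccvj_Jmp; auto. apply ccvj_JWhere; auto. apply ccvj_refl. Qed.

Lemma fill_where c L N : ccvj_eq (fillctx c (Where L N)) (JWhere (fillctx (kren_o S c) L) N).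
Proof. destruct c; simpl. apply ccvj_E3. apply ccvj_E1. Qed.

Lemma renk_sconsS J l : ren_kj (scons l (fun n => n)) (ren_kj S J) = J.
Proof. rewrite (proj2 ren_k_ren_k). simpl. apply ren_k_id. Qed.

Lemma jmp_mu_trick l J : ccvj_eq (Jmp l (Mu (ren_kj S J))) J.
Proof. eapply ccvj_trans. apply ccvj_mu. rewrite renk_sconsS. constructor. Qed.

Lemma jlet J V : is_value V = true -> ccvj_eq (JWhere J V) (gsubj (scons V Var) (fun j => KJ j) J).
Proof. intros HV.
  eapply ccvj_trans. apply ccvj_JWhere. apply ccvj_sym. apply (jmp_mu_trick 0). constructor.
  eapply ccvj_trans. apply ccvj_sym. apply ccvj_E3.
  eapply ccvj_trans. apply ccvj_Jmp. apply ccv_let; auto.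
  eapply ccvj_trans. apply ccvj_Jmp. apply ccv_eqrefl. apply (proj1 sub_o_gsub).
  simpl. eapply ccvj_trans. apply ccvj_mu.
  apply ccvj_eqrefl. rewrite (proj2 gsub_ren_k). rewrite (proj2 ren_k_gsub).
  f_equal. fext. rewrite (proj1 ren_k_ren_k). simpl. apply ren_k_id.
  all: try (fext; reflexivity). Qed.

Definition rho_k (k : nat) (J1 : jump) : nat -> kctx :=
  fun j => if Nat.eqb j k then KW (ren_kj S J1) else KJ j.

Lemma ren_o_Mu2 xi J1 : ren_o xi (Mu (ren_kj (fun j => S (S j)) J1)) = Mu (ren_kj (fun j => S (S j)) (ren_oj xi J1)).
Proof. simpl. f_equal. apply (proj2 ren_o_ren_k). Qed.

Lemma ren_k_Mu2 J1 : ren_k S (Mu (ren_kj (fun j => S (S j)) J1)) = Mu (ren_kj (fun j => S (S j)) (ren_kj S J1)).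
Proof. simpl. f_equal. rewrite !(proj2 ren_k_ren_k). reflexivity. Qed.

Lemma up_o_Var : up_o Var = Var.
Proof. fext; destruct x; reflexivity. Qed.

Lemma rho_k_o k J1 : (fun j => kren_o S (rho_k k J1 j)) = rho_k k (ren_oj (uprn S) J1).
Proof. fext. unfold rho_k. destruct (Nat.eqb x k); simpl; auto. f_equal. apply (proj2 ren_o_ren_k). Qed.

Lemma rho_k_k k J1 : scons (KJ 0) (fun j => kren_k S (rho_k k J1 j)) = rho_k (S k) (ren_kj S J1).
Proof. fext. unfold rho_k. destruct x; simpl; auto. destruct (Nat.eqb x k); simpl; auto. Qed.

Lemma csub_gsub :
  (forall X k J1, ccv_eq (csub k (Mu (ren_kj (fun j => S (S j)) J1)) X) (gsub Var (rho_k k J1) X)) /\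
  (forall X k J1, ccvj_eq (csubj k (Mu (ren_kj (fun j => S (S j)) J1)) X) (gsubj Var (rho_k k J1) X)).
Proof. apply tj_mind; intros; cbn [csub csubj gsub gsubj].
  - constructor.
  - rewrite ren_o_Mu2. apply ccv_Lam. rewrite up_o_Var, rho_k_o. auto.
  - apply ccv_App; auto.
  - rewrite ren_o_Mu2. apply ccv_Where. rewrite up_o_Var, rho_k_o. auto. auto.
  - rewrite ren_k_Mu2. apply ccv_Mu. rewrite rho_k_k. apply H.
  - destruct (Nat.eqb n k) eqn:E.
    + apply Nat.eqb_eq in E; subst. unfold rho_k at 1. rewrite Nat.eqb_refl. simpl.
      eapply ccvj_trans. apply ccvj_Jmp. apply ccv_Where. apply ccv_refl. apply H.
      eapply ccvj_trans. apply ccvj_Jmp. apply ccv_E2.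
      eapply ccvj_trans. apply ccvj_mu. simpl. apply ccvj_eqrefl.
      rewrite (proj2 ren_k_ren_k), (proj1 ren_k_ren_k). simpl. rewrite (proj1 ren_k_id). reflexivity.
    + unfold rho_k at 1. rewrite E. simpl. apply ccvj_Jmp; auto.
  - rewrite ren_o_Mu2. apply ccvj_JWhere; auto. rewrite up_o_Var, rho_k_o. auto.
Qed.

Lemma fill_mu c J : ccvj_eq (fillctx c (Mu J)) (gsubj Var (scons c (fun j => KJ j)) J).
Proof. destruct c as [l|J0]; simpl.
  - eapply ccvj_trans. apply ccvj_mu. apply ccvj_eqrefl.
    replace (scons (KJ l) (fun j => KJ j)) with (fun j => KJ (scons l (fun n => n) j)) by (fext; destruct x; reflexivity).
    replace (Var) with (fun n => Var ((fun n => n) n)) by reflexivity.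
    rewrite (proj2 gsub_ren). rewrite (proj2 ren_o_id). reflexivity.
  - eapply ccvj_trans. apply ccvj_JWhere. apply ccvj_sym. apply (jmp_mu_trick 0). constructor.
    eapply ccvj_trans. apply ccvj_sym. apply ccvj_E3.
    eapply ccvj_trans. apply ccvj_Jmp. apply ccv_letmu.
    eapply ccvj_trans. apply ccvj_Jmp. apply ccv_Mu.
    replace (ren_k S (Mu (ren_kj S J0))) with (Mu (ren_kj (fun j => S (S j)) J0)).
    apply (proj2 csub_gsub).
    simpl. f_equal. rewrite (proj2 ren_k_ren_k). reflexivity.
    eapply ccvj_trans. apply ccvj_mu. apply ccvj_eqrefl.
    rewrite (proj2 ren_k_gsub). f_equal. fext. unfold rho_k. destruct x; simpl.
    rewrite renk_sconsS. reflexivity. reflexivity.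
Qed.

Open Scope bool_scope.
Inductive srt := sW | sT | sQ | sK.

Fixpoint chk (G : nat -> bool) (s : srt) (t : tm) {struct t} : bool :=
  match s, t with
  | sW, tvar n => G n
  | sW, tlam b => chk (scons true G) sT b
  | sT, tlam b => chk (scons false G) sQ b
  | sT, tapp a b => chk G sW a && chk G sW b
  | sQ, tapp a b => (chk G sK a && chk G sW b) || (chk G sT a && chk G sK b)
  | sK, tvar n => negb (G n)
  | sK, tlam b => chk (scons true G) sQ b
  | _, _ => false
  end.

Fixpoint cntW (G : nat -> bool) (n : nat) : nat :=
  match n with 0 => 0 | S m => (if G 0 then 1 else 0) + cntW (fun i => G (S i)) m end.
Fixpoint cntK (G : nat -> bool) (n : nat) : nat :=
  match n with 0 => 0 | S m => (if G 0 then 0 else 1) + cntK (fun i => G (S i)) m end.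

Fixpoint invW (G : nat -> bool) (t : tm) : term :=
  match t with
  | tvar n => Var (cntW G n)
  | tlam b => Lam (invT (scons true G) b)
  | _ => Var 0
  end
with invT (G : nat -> bool) (t : tm) : term :=
  match t with
  | tlam b => Mu (invQ (scons false G) b)
  | tapp a b => App (invW G a) (invW G b)
  | _ => Var 0
  end
with invQ (G : nat -> bool) (t : tm) : jump :=
  match t with
  | tapp a b => if chk G sW b then fillctx (kinv G a) (invW G b) else fillctx (kinv G b) (invT G a)
  | _ => Jmp 0 (Var 0)
  end
with kinv (G : nat -> bool) (t : tm) : kctx :=
  match t with
  | tvar n => KJ (cntK G n)
  | tlam b => KW (invQ (scons true G) b)
  | _ => KJ 0
  end.

Lemma chk_disj t : forall G, (chk G sW t && chk G sK t = false) /\ (chk G sT t && chk G sQ t = false).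
Proof. induction t; intros G; simpl.
  - destruct (G n); auto.
  - destruct (IHt (scons true G)) as [_ A]. split; auto. destruct (chk (scons false G) sQ t); auto.
  - destruct (IHt1 G) as [A1 _]. destruct (IHt2 G) as [A2 _]. split; auto.
    destruct (chk G sW t1), (chk G sK t1), (chk G sW t2), (chk G sK t2), (chk G sT t1); simpl in *; auto.
Qed.

Lemma chk_WK t G : chk G sK t = true -> chk G sW t = false.
Proof. intros H. destruct (chk_disj t G) as [A _]. rewrite H in A. destruct (chk G sW t); auto. Qed.

Lemma inv_value G t : is_value (invW G t) = true.
Proof. destruct t; reflexivity. Qed.

Definition RenOK (G G' : nat -> bool) (xi xo xk : nat -> nat) :=
  forall n, G' (xi n) = G n /\ (G n = true -> cntW G' (xi n) = xo (cntW G n)) /\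
            (G n = false -> cntK G' (xi n) = xk (cntK G n)).

Lemma RenOK_up G G' xi xo xk b : RenOK G G' xi xo xk ->
  RenOK (scons b G) (scons b G') (uprn xi) (if b then uprn xo else xo) (if b then xk else uprn xk).
Proof. intros H [|n]; simpl.
  - destruct b; simpl; repeat split; auto; intros; discriminate.
  - destruct (H n) as [A [B C]]. repeat split; auto; destruct b; simpl; intros; f_equal; auto.
Qed.

Lemma ren_inv t : forall G G' xi xo xk, RenOK G G' xi xo xk ->
  (forall s, chk G' s (tren xi t) = chk G s t) /\
  (chk G sW t = true -> invW G' (tren xi t) = ren_o xo (ren_k xk (invW G t))) /\
  (chk G sT t = true -> invT G' (tren xi t) = ren_o xo (ren_k xk (invT G t))) /\
  (chk G sQ t = true -> invQ G' (tren xi t) = ren_oj xo (ren_kj xk (invQ G t))) /\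
  (chk G sK t = true -> kinv G' (tren xi t) = kren_o xo (kren_k xk (kinv G t))).
Proof. induction t; intros G G' xi xo xk H.
  - destruct (H n) as [A [B C]]. simpl. repeat split.
    + destruct s; simpl; rewrite ?A; auto.
    + intros E; rewrite B; auto.
    + intros; discriminate.
    + intros; discriminate.
    + intros E. rewrite C; auto. destruct (G n); simpl in *; auto; discriminate.
  - destruct (IHt _ _ _ _ _ (RenOK_up _ _ _ _ _ true H)) as [A1 [B1 [C1 [D1 E1]]]].
    destruct (IHt _ _ _ _ _ (RenOK_up _ _ _ _ _ false H)) as [A2 [B2 [C2 [D2 E2]]]].
    simpl in *. repeat split.
    + destruct s; simpl; auto.
    + intros E. rewrite C1; auto.
    + intros E. rewrite D2; auto.
    + intros; discriminate.
    + intros E. rewrite D1; auto.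
  - destruct (IHt1 _ _ _ _ _ H) as [A1 [B1 [C1 [D1 E1]]]].
    destruct (IHt2 _ _ _ _ _ H) as [A2 [B2 [C2 [D2 E2]]]].
    simpl. repeat split.
    + destruct s; simpl; rewrite ?A1, ?A2; auto.
    + intros; discriminate.
    + intros E. apply andb_prop in E; destruct E. rewrite B1, B2; auto.
    + intros E. rewrite A2. destruct (chk G sW t2) eqn:W2.
      * rewrite E1, B2; auto. destruct (kinv G t1); reflexivity.
        rewrite Bool.andb_true_r in E. destruct (chk G sK t1) eqn:K1; auto. simpl in E.
        apply andb_prop in E; destruct E as [_ E]. rewrite (chk_WK _ _ E) in W2; discriminate.
      * rewrite Bool.andb_false_r in E. simpl in E.
        apply andb_prop in E; destruct E. rewrite E2, C1; auto. destruct (kinv G t2); reflexivity.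
    + intros; discriminate.
Qed.

Lemma kren_k_id c : kren_k (fun n => n) c = c.
Proof. destruct c; simpl; auto. rewrite (proj2 ren_k_id); auto. Qed.
Lemma kren_o_id c : kren_o (fun n => n) c = c.
Proof. destruct c; simpl; auto. rewrite uprn_id, (proj2 ren_o_id); auto. Qed.

Lemma RenOK_St G : RenOK G (scons true G) S S (fun n => n).
Proof. intros n; simpl; repeat split; intros; reflexivity. Qed.
Lemma RenOK_Sf G : RenOK G (scons false G) S (fun n => n) S.
Proof. intros n; simpl; repeat split; intros; reflexivity. Qed.

Lemma chk_shift G b s t : chk (scons b G) s (tren S t) = chk G s t.
Proof. destruct b. apply (proj1 (ren_inv t _ _ _ _ _ (RenOK_St G))). apply (proj1 (ren_inv t _ _ _ _ _ (RenOK_Sf G))). Qed.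

Lemma invW_St G t : chk G sW t = true -> invW (scons true G) (tren S t) = ren_o S (invW G t).
Proof. intros H. rewrite (proj1 (proj2 (ren_inv t _ _ _ _ _ (RenOK_St G)))) by auto. rewrite (proj1 ren_k_id); auto. Qed.
Lemma invW_Sf G t : chk G sW t = true -> invW (scons false G) (tren S t) = ren_k S (invW G t).
Proof. intros H. rewrite (proj1 (proj2 (ren_inv t _ _ _ _ _ (RenOK_Sf G)))) by auto. rewrite (proj1 ren_o_id); auto. Qed.
Lemma kinv_St G t : chk G sK t = true -> kinv (scons true G) (tren S t) = kren_o S (kinv G t).
Proof. intros H. rewrite (proj2 (proj2 (proj2 (proj2 (ren_inv t _ _ _ _ _ (RenOK_St G)))))) by auto. rewrite kren_k_id; auto. Qed.
Lemma kinv_Sf G t : chk G sK t = true -> kinv (scons false G) (tren S t) = kren_k S (kinv G t).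
Proof. intros H. rewrite (proj2 (proj2 (proj2 (proj2 (ren_inv t _ _ _ _ _ (RenOK_Sf G)))))) by auto. rewrite kren_o_id; auto. Qed.
Lemma invT_St G t : chk G sT t = true -> invT (scons true G) (tren S t) = ren_o S (invT G t).
Proof. intros H. rewrite (proj1 (proj2 (proj2 (ren_inv t _ _ _ _ _ (RenOK_St G))))) by auto. rewrite (proj1 ren_k_id); auto. Qed.
Lemma invT_Sf G t : chk G sT t = true -> invT (scons false G) (tren S t) = ren_k S (invT G t).
Proof. intros H. rewrite (proj1 (proj2 (proj2 (ren_inv t _ _ _ _ _ (RenOK_Sf G))))) by auto. rewrite (proj1 ren_o_id); auto. Qed.

Definition SubOK (G G' : nat -> bool) (sigma : nat -> tm) (tau : nat -> term) (rho : nat -> kctx) :=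
  forall n, (G n = true -> chk G' sW (sigma n) = true /\ invW G' (sigma n) = tau (cntW G n)) /\
            (G n = false -> chk G' sK (sigma n) = true /\ kinv G' (sigma n) = rho (cntK G n)).

Lemma SubOK_upt G G' sigma tau rho : SubOK G G' sigma tau rho ->
  SubOK (scons true G) (scons true G') (tup sigma) (up_o tau) (fun j => kren_o S (rho j)).
Proof. intros H [|n]; simpl.
  - split; intros; try discriminate. split; reflexivity.
  - destruct (H n) as [A B]. split; intros E.
    + destruct (A E) as [A1 A2]. rewrite chk_shift. split; auto. rewrite invW_St; auto. rewrite A2; reflexivity.
    + destruct (B E) as [B1 B2]. rewrite chk_shift. split; auto. rewrite kinv_St; auto. rewrite B2; reflexivity.
Qed.

Lemma SubOK_upf G G' sigma tau rho : SubOK G G' sigma tau rho ->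
  SubOK (scons false G) (scons false G') (tup sigma) (fun n => ren_k S (tau n)) (scons (KJ 0) (fun j => kren_k S (rho j))).
Proof. intros H [|n]; simpl.
  - split; intros; try discriminate. split; reflexivity.
  - destruct (H n) as [A B]. split; intros E.
    + destruct (A E) as [A1 A2]. rewrite chk_shift. split; auto. rewrite invW_Sf; auto. rewrite A2; reflexivity.
    + destruct (B E) as [B1 B2]. rewrite chk_shift. split; auto. rewrite kinv_Sf; auto. rewrite B2; reflexivity.
Qed.

Lemma sub_inv t : forall G G' sigma tau rho, SubOK G G' sigma tau rho ->
  (chk G sW t = true -> chk G' sW (tsub sigma t) = true /\ invW G' (tsub sigma t) = gsub tau rho (invW G t)) /\
  (chk G sT t = true -> chk G' sT (tsub sigma t) = true /\ invT G' (tsub sigma t) = gsub tau rho (invT G t)) /\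
  (chk G sQ t = true -> chk G' sQ (tsub sigma t) = true /\ invQ G' (tsub sigma t) = gsubj tau rho (invQ G t)) /\
  (chk G sK t = true -> chk G' sK (tsub sigma t) = true /\ kinv G' (tsub sigma t) = gsubk tau rho (kinv G t)).
Proof. induction t; intros G G' sigma tau rho H.
  - destruct (H n) as [A B]. simpl. refine (conj _ (conj _ (conj _ _))); intros E; try discriminate; split.
    + apply A; auto.
    + apply A; auto.
    + apply B; destruct (G n); auto; discriminate.
    + apply B; destruct (G n); auto; discriminate.
  - destruct (IHt _ _ _ _ _ (SubOK_upt _ _ _ _ _ H)) as [A1 [B1 [C1 D1]]].
    destruct (IHt _ _ _ _ _ (SubOK_upf _ _ _ _ _ H)) as [A2 [B2 [C2 D2]]].
    simpl. refine (conj _ (conj _ (conj _ _))); intros E; try discriminate; split.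
    + apply B1; auto.
    + rewrite (proj2 (B1 E)); auto.
    + apply C2; auto.
    + rewrite (proj2 (C2 E)); auto.
    + apply C1; auto.
    + rewrite (proj2 (C1 E)); auto.
  - destruct (IHt1 _ _ _ _ _ H) as [A1 [B1 [C1 D1]]].
    destruct (IHt2 _ _ _ _ _ H) as [A2 [B2 [C2 D2]]].
    simpl. refine (conj _ (conj _ (conj _ _))); intros E; try discriminate; split.
    + apply andb_prop in E; destruct E as [E1 E2]. rewrite (proj1 (A1 E1)), (proj1 (A2 E2)); auto.
    + apply andb_prop in E; destruct E as [E1 E2]. rewrite (proj2 (A1 E1)), (proj2 (A2 E2)); auto.
    + destruct (chk G sW t2) eqn:W2.
      * assert (K1 : chk G sK t1 = true).
        { rewrite Bool.andb_true_r in E. destruct (chk G sK t1) eqn:K1; auto. simpl in E.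
          apply andb_prop in E; destruct E as [_ E]. rewrite (chk_WK _ _ E) in W2; discriminate. }
        rewrite (proj1 (D1 K1)), (proj1 (A2 eq_refl)); auto.
      * rewrite Bool.andb_false_r in E. simpl in E. apply andb_prop in E; destruct E as [E1 E2].
        rewrite (proj1 (B1 E1)), (proj1 (D2 E2)). apply Bool.orb_true_r.
    + destruct (chk G sW t2) eqn:W2.
      * assert (K1 : chk G sK t1 = true).
        { rewrite Bool.andb_true_r in E. destruct (chk G sK t1) eqn:K1; auto. simpl in E.
          apply andb_prop in E; destruct E as [_ E]. rewrite (chk_WK _ _ E) in W2; discriminate. }
        rewrite (proj1 (A2 eq_refl)). rewrite gsub_fill. rewrite (proj2 (D1 K1)), (proj2 (A2 eq_refl)); auto.
      * rewrite Bool.andb_false_r in E. simpl in E. apply andb_prop in E; destruct E as [E1 E2].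
        rewrite (chk_WK _ _ (proj1 (D2 E2))). rewrite gsub_fill. rewrite (proj2 (D2 E2)), (proj2 (B1 E1)); auto.
Qed.

Lemma SubOK_betaW G a : chk G sW a = true ->
  SubOK (scons true G) G (scons a tvar) (scons (invW G a) Var) (fun j => KJ j).
Proof. intros H [|n]; simpl; split; intros E; try discriminate; repeat split; try rewrite E; auto. Qed.

Lemma SubOK_betaK G a : chk G sK a = true ->
  SubOK (scons false G) G (scons a tvar) Var (scons (kinv G a) (fun j => KJ j)).
Proof. intros H [|n]; simpl; split; intros E; try discriminate; repeat split; try rewrite E; auto. Qed.

Definition Sound (t u : tm) := forall G,
  (chk G sW t = true -> chk G sW u = true /\ ccv_eq (invW G t) (invW G u)) /\
  (chk G sT t = true -> chk G sT u = true /\ ccv_eq (invT G t) (invT G u)) /\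
  (chk G sQ t = true -> chk G sQ u = true /\ ccvj_eq (invQ G t) (invQ G u)) /\
  (chk G sK t = true -> chk G sK u = true /\ forall M, ccvj_eq (fillctx (kinv G t) M) (fillctx (kinv G u) M)).

Lemma Q_inv G a c : chk G sQ (tapp a c) = true ->
  (chk G sW c = true /\ chk G sK a = true) \/ (chk G sW c = false /\ chk G sT a = true /\ chk G sK c = true).
Proof. simpl. intros E. destruct (chk G sW c) eqn:W2.
  - left; split; auto. rewrite Bool.andb_true_r in E. destruct (chk G sK a) eqn:K1; auto. simpl in E.
    apply andb_prop in E; destruct E as [_ E]. rewrite (chk_WK _ _ E) in W2; discriminate.
  - right. rewrite Bool.andb_false_r in E. simpl in E. apply andb_prop in E; destruct E; auto.
Qed.

Lemma Sound_lam b b' : Sound b b' -> Sound (tlam b) (tlam b').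
Proof. intros H G. simpl.
  destruct (H (scons true G)) as [_ [A1 [B1 _]]]. destruct (H (scons false G)) as [_ [_ [B2 _]]].
  refine (conj _ (conj _ (conj _ _))); intros E; try discriminate.
  - destruct (A1 E); split; auto. apply ccv_Lam; auto.
  - destruct (B2 E); split; auto. apply ccv_Mu; auto.
  - destruct (B1 E); split; auto. intros M. simpl. apply ccvj_JWhere; auto. constructor.
Qed.

Lemma Sound_appl a a' c : Sound a a' -> Sound (tapp a c) (tapp a' c).
Proof. intros H G. destruct (H G) as [A [B [C D]]].
  refine (conj _ (conj _ (conj _ _))); intros E; try (simpl in E; discriminate).
  - simpl in *. apply andb_prop in E; destruct E as [E1 E2]. destruct (A E1).
    rewrite H0, E2; split; auto. apply ccv_App; auto. constructor.
  - destruct (Q_inv _ _ _ E) as [[W K]|[W [T K]]].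
    + destruct (D K) as [K' F]. simpl. rewrite W, K'. split; auto; try apply F.
    + destruct (B T) as [T' F]. simpl. rewrite W, T', K. rewrite !Bool.andb_false_r. split; auto.
      try (apply fill_cong; auto).
Qed.

Lemma Sound_appr a c c' : Sound c c' -> Sound (tapp a c) (tapp a c').
Proof. intros H G. destruct (H G) as [A [B [C D]]].
  refine (conj _ (conj _ (conj _ _))); intros E; try (simpl in E; discriminate).
  - simpl in *. apply andb_prop in E; destruct E as [E1 E2]. destruct (A E2).
    rewrite H0, E1; split; auto. apply ccv_App; auto. constructor.
  - destruct (Q_inv _ _ _ E) as [[W K]|[W [T K]]].
    + destruct (A W) as [W' F]. simpl. rewrite W, W', K. split; auto; apply fill_cong; auto.
    + destruct (D K) as [K' F]. simpl. rewrite W, (chk_WK _ _ K'), T, K'.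
      rewrite !Bool.andb_false_r. split; auto.
Qed.

Lemma bs_sound t u : bs t u -> Sound t u.
Proof. induction 1.
  - intros G. refine (conj _ (conj _ (conj _ _))); intros E; try (simpl in E; discriminate).
    + simpl in E. apply andb_prop in E; destruct E as [E1 E2].
      destruct (proj1 (proj2 (sub_inv b _ _ _ _ _ (SubOK_betaW G a E2))) E1) as [C I].
      split; auto. rewrite I. simpl.
      eapply ccv_trans. apply ccv_beta. apply inv_value.
      eapply ccv_trans. apply ccv_let. apply inv_value.
      apply ccv_eqrefl. apply (proj1 sub_o_gsub).
    + destruct (Q_inv _ _ _ E) as [[W K]|[W [T K]]].
      * simpl in K. destruct (proj1 (proj2 (proj2 (sub_inv b _ _ _ _ _ (SubOK_betaW G a W)))) K) as [C I].
        split; auto. rewrite I. simpl. rewrite W. simpl. apply jlet. apply inv_value.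
      * simpl in T. destruct (proj1 (proj2 (proj2 (sub_inv b _ _ _ _ _ (SubOK_betaK G a K)))) T) as [C I].
        split; auto. rewrite I. simpl. rewrite W. apply fill_mu.
  - apply Sound_lam; auto.
  - apply Sound_appl; auto.
  - apply Sound_appr; auto.
Qed.

Lemma es_sound t u : es t u -> Sound t u.
Proof. induction 1.
  - intros G. refine (conj _ (conj _ (conj _ _))); intros E; try (simpl in E; discriminate).
    + simpl in E. rewrite Bool.andb_true_r, chk_shift in E. split; auto. simpl.
      rewrite invW_St; auto. apply ccv_eta. apply inv_value.
    + simpl in E. rewrite Bool.andb_false_r, Bool.andb_true_r, chk_shift in E. simpl in E. split; auto.
      simpl. rewrite invT_Sf; auto. apply ccv_mueta.
    + simpl in E. rewrite Bool.andb_false_r, Bool.andb_true_r, chk_shift, Bool.orb_false_r in E. split; auto.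
      intros M. simpl. rewrite kinv_St; auto.
      eapply ccvj_trans. apply ccvj_sym. apply fill_where.
      apply fill_cong. apply ccv_letid.
  - apply Sound_lam; auto.
  - apply Sound_appl; auto.
  - apply Sound_appr; auto.
Qed.

Lemma red_sound t u : rstar st t u -> forall G, chk G sT t = true -> chk G sT u = true /\ ccv_eq (invT G t) (invT G u).
Proof. induction 1; intros G E.
  - split; auto. constructor.
  - assert (S1 : Sound t u) by (destruct H; [apply bs_sound | apply es_sound]; auto).
    destruct (proj1 (proj2 (S1 G)) E) as [E1 C1].
    destruct (IHrstar G E1) as [E2 C2]. split; auto. eapply ccv_trans; eauto.
Qed.

Definition omap (f : tm -> tm) (o : option tm) := match o with Some x => Some (f x) | None => None end.

Lemma tren_up_S xi x : tren (uprn xi) (tren S x) = tren S (tren xi x).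
Proof. rewrite !tren_tren. reflexivity. Qed.

Lemma tr_ren :
  (forall M xi eo ek eo' ek', (forall n, eo' n = tren xi (eo n)) -> (forall n, ek' n = tren xi (ek n)) ->
     (forall K, tr eo' ek' M (tren xi K) = tren xi (tr eo ek M K)) /\
     star eo' ek' M = omap (tren xi) (star eo ek M)) /\
  (forall J xi eo ek eo' ek', (forall n, eo' n = tren xi (eo n)) -> (forall n, ek' n = tren xi (ek n)) ->
     trj eo' ek' J = tren xi (trj eo ek J)).
Proof. apply tj_mind; intros.
  - simpl. rewrite H. auto.
  - assert (E : tr (sh (scons (tvar 0) (sh eo'))) (sh (sh ek')) t (tvar 0) =
                tren (uprn (uprn xi)) (tr (sh (scons (tvar 0) (sh eo))) (sh (sh ek)) t (tvar 0))).
    { refine (proj1 (H (uprn (uprn xi)) _ _ _ _ _ _) (tvar 0)).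
      - intros [|m]; unfold sh; simpl; rewrite ?H0, ?tren_tren; reflexivity.
      - intros m; unfold sh; simpl; rewrite ?H1, ?tren_tren; reflexivity. }
    simpl. rewrite E. auto.
  - destruct (H xi eo ek eo' ek' H1 H2) as [A1 S1]. destruct (H0 xi eo ek eo' ek' H1 H2) as [A2 S2].
    split; auto. intros K. simpl. rewrite S1, S2.
    destruct (star eo ek t) as [v1|], (star eo ek t0) as [v2|]; simpl; auto.
    + rewrite <- A2. f_equal. simpl. rewrite !tren_up_S. auto.
    + rewrite <- A1. f_equal. simpl. rewrite !tren_up_S. auto.
    + rewrite <- A1. f_equal. simpl. f_equal.
      rewrite <- (proj1 (H0 (uprn xi) (sh eo) (sh ek) (sh eo') (sh ek')
         ltac:(intros m; unfold sh; rewrite H1, tren_up_S; auto)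
         ltac:(intros m; unfold sh; rewrite H2, tren_up_S; auto))).
      f_equal. simpl. rewrite !tren_tren. reflexivity.
  - split; auto. intros K. simpl.
    rewrite <- (proj1 (H0 xi eo ek eo' ek' H1 H2)). f_equal. simpl. f_equal.
    rewrite <- (proj1 (H (uprn xi) (scons (tvar 0) (sh eo)) (sh ek) (scons (tvar 0) (sh eo')) (sh ek')
         ltac:(intros [|m]; unfold sh; simpl; rewrite ?H1, ?tren_up_S; auto)
         ltac:(intros m; unfold sh; rewrite H2, tren_up_S; auto))).
    rewrite tren_up_S. auto.
  - split; auto. intros K. simpl. f_equal. f_equal.
    apply H; [intros m; unfold sh; rewrite H0, tren_up_S; auto | intros [|m]; unfold sh; simpl; rewrite ?H1, ?tren_up_S; auto].
  - simpl. rewrite H1. apply H; auto.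
  - simpl. rewrite <- (proj1 (H0 xi eo ek eo' ek' H1 H2)). f_equal. simpl. f_equal.
    apply H; [intros [|m]; unfold sh; simpl; rewrite ?H1, ?tren_up_S; auto | intros m; unfold sh; rewrite H2, tren_up_S; auto].
Qed.

Definition EnvO (G : nat -> bool) (eo : nat -> tm) (xo : nat -> nat) :=
  forall n, exists m, eo n = tvar m /\ G m = true /\ cntW G m = xo n.
Definition EnvK (G : nat -> bool) (ek : nat -> tm) (xk : nat -> nat) :=
  forall n, exists m, ek n = tvar m /\ G m = false /\ cntK G m = xk n.

Lemma EnvO_sht G eo xo : EnvO G eo xo -> EnvO (scons true G) (sh eo) (fun n => S (xo n)).
Proof. intros H n. destruct (H n) as [m [A [B C]]]. exists (S m). unfold sh; rewrite A; simpl. auto. Qed.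
Lemma EnvO_shf G eo xo : EnvO G eo xo -> EnvO (scons false G) (sh eo) xo.
Proof. intros H n. destruct (H n) as [m [A [B C]]]. exists (S m). unfold sh; rewrite A; simpl. auto. Qed.
Lemma EnvK_sht G ek xk : EnvK G ek xk -> EnvK (scons true G) (sh ek) xk.
Proof. intros H n. destruct (H n) as [m [A [B C]]]. exists (S m). unfold sh; rewrite A; simpl. auto. Qed.
Lemma EnvK_shf G ek xk : EnvK G ek xk -> EnvK (scons false G) (sh ek) (fun n => S (xk n)).
Proof. intros H n. destruct (H n) as [m [A [B C]]]. exists (S m). unfold sh; rewrite A; simpl. auto. Qed.
Lemma EnvO_cons G eo xo : EnvO G eo xo -> EnvO (scons true G) (scons (tvar 0) (sh eo)) (uprn xo).
Proof. intros H [|n]. exists 0; simpl; auto. destruct (H n) as [m [A [B C]]]. exists (S m). simpl. unfold sh; rewrite A; simpl. auto. Qed.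
Lemma EnvK_cons G ek xk : EnvK G ek xk -> EnvK (scons false G) (scons (tvar 0) (sh ek)) (uprn xk).
Proof. intros H [|n]. exists 0; simpl; auto. destruct (H n) as [m [A [B C]]]. exists (S m). simpl. unfold sh; rewrite A; simpl. auto. Qed.

Lemma is_value_ren xo xk M : is_value (ren_o xo (ren_k xk M)) = is_value M.
Proof. destruct M; reflexivity. Qed.

Lemma star_spec eo ek M : (is_value M = false /\ star eo ek M = None) \/ (is_value M = true /\ exists v, star eo ek M = Some v).
Proof. destruct M; simpl; eauto. Qed.

Lemma val_Q G K v : chk G sK K = true -> chk G sW v = true ->
  chk G sQ (tapp K v) = true /\ invQ G (tapp K v) = fillctx (kinv G K) (invW G v).
Proof. intros A B. simpl. rewrite A, B. auto. Qed.

Lemma star_sh eo ek M : star (sh eo) (sh ek) M = omap (tren S) (star eo ek M).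
Proof. apply (proj2 (proj1 tr_ren M S eo ek (sh eo) (sh ek) (fun n => eq_refl) (fun n => eq_refl))). Qed.

Lemma orb_r a b : b = true -> a || b = true.
Proof. intros; subst; apply Bool.orb_true_r. Qed.

Lemma cps_inv :
  (forall M G eo ek xo xk, EnvO G eo xo -> EnvK G ek xk ->
     (forall K, chk G sK K = true -> chk G sQ (tr eo ek M K) = true /\
        ccvj_eq (invQ G (tr eo ek M K)) (fillctx (kinv G K) (ren_o xo (ren_k xk M)))) /\
     (forall v, star eo ek M = Some v -> chk G sW v = true /\ ccv_eq (invW G v) (ren_o xo (ren_k xk M)))) /\
  (forall J G eo ek xo xk, EnvO G eo xo -> EnvK G ek xk ->
     chk G sQ (trj eo ek J) = true /\ ccvj_eq (invQ G (trj eo ek J)) (ren_oj xo (ren_kj xk J))).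
Proof. apply tj_mind.
  - intros n G eo ek xo xk HO HK.
    destruct (HO n) as [m [A [B C]]].
    assert (SV : chk G sW (eo n) = true /\ ccv_eq (invW G (eo n)) (ren_o xo (ren_k xk (Var n)))).
    { rewrite A; simpl. rewrite B, C. split; auto. constructor. }
    split.
    + intros K HKK. change (tr eo ek (Var n) K) with (tapp K (eo n)). destruct (val_Q G K (eo n) HKK (proj1 SV)) as [Q1 Q2]. split; auto.
      rewrite Q2. apply fill_cong. apply SV.
    + intros v Hv. simpl in Hv. injection Hv; intros; subst. auto.
  - intros B IH G eo ek xo xk HO HK.
    destruct (IH (scons false (scons true G)) _ _ _ _ (EnvO_shf _ _ _ (EnvO_cons _ _ _ HO))
                 (EnvK_shf _ _ _ (EnvK_sht _ _ _ HK))) as [T1 _].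
    destruct (T1 (tvar 0) eq_refl) as [C1 I1].
    set (v := tlam (tlam (tr (sh (scons (tvar 0) (sh eo))) (sh (sh ek)) B (tvar 0)))).
    assert (SV : chk G sW v = true /\ ccv_eq (invW G v) (ren_o xo (ren_k xk (Lam B)))).
    { split. simpl; auto. simpl. apply ccv_Lam.
      eapply ccv_trans. apply ccv_Mu. apply I1. simpl.
      replace (ren_o (uprn xo) (ren_k (fun n => S (xk n)) B)) with (ren_k S (ren_o (uprn xo) (ren_k xk B))).
      apply ccv_mueta. rewrite <- (proj1 ren_o_ren_k). rewrite (proj1 ren_k_ren_k). reflexivity. }
    split.
    + intros K HKK. change (tr eo ek (Lam B) K) with (tapp K v).
      destruct (val_Q G K v HKK (proj1 SV)) as [Q1 Q2]. split; auto.
      rewrite Q2. apply fill_cong. apply SV.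
    + intros w Hw. simpl in Hw. injection Hw; intros; subst. auto.
  - intros M1 IH1 M2 IH2 G eo ek xo xk HO HK. split; [|intros v Hv; discriminate].
    intros K HKK.
    destruct (IH1 _ _ _ _ _ HO HK) as [T1 S1]. destruct (IH2 _ _ _ _ _ HO HK) as [T2 S2].
    destruct (IH1 _ _ _ _ _ (EnvO_sht _ _ _ HO) (EnvK_sht _ _ _ HK)) as [_ S1'].
    destruct (IH2 _ _ _ _ _ (EnvO_sht _ _ _ HO) (EnvK_sht _ _ _ HK)) as [_ S2'].
    assert (KW0 := chk_WK _ _ HKK).
    destruct (star_spec eo ek M1) as [[V1 E1]|[V1 [v1 E1]]];
    destruct (star_spec eo ek M2) as [[V2 E2]|[V2 [v2 E2]]]; simpl; rewrite E1, E2.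
    +
      set (K2 := tlam (tapp (tapp (tvar 1) (tvar 0)) (tren S (tren S K)))).
      assert (HK2 : chk (scons true G) sK K2 = true).
      { simpl. rewrite !chk_shift, HKK. first [reflexivity | apply orb_r; simpl; auto]. }
      destruct (proj1 (IH2 _ _ _ _ _ (EnvO_sht _ _ _ HO) (EnvK_sht _ _ _ HK)) K2 HK2) as [C2 I2].
      destruct (T1 (tlam (tr (sh eo) (sh ek) M2 K2)) C2) as [C1 I1].
      split; auto.
      eapply ccvj_trans. apply I1. simpl kinv. simpl fillctx.
      eapply ccvj_trans. apply ccvj_JWhere. apply I2. constructor.
      unfold K2. simpl kinv. simpl invQ. rewrite !chk_shift, KW0. simpl.
      rewrite kinv_St by (rewrite chk_shift; auto). rewrite kinv_St by auto.
      apply ccvj_sym.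
      eapply ccvj_trans. apply fill_cong. apply ccv_appL. rewrite is_value_ren; auto.
      eapply ccvj_trans. apply fill_cong. apply ccv_Where. apply ccv_appR. reflexivity.
        rewrite (proj1 ren_o_ren_o), is_value_ren; auto. constructor.
      eapply ccvj_trans. apply fill_where.
      apply ccvj_JWhere; [|constructor].
      eapply ccvj_trans. apply fill_where. simpl.
      rewrite (proj1 ren_o_ren_o). constructor.
    +
      assert (SV2 : star (sh eo) (sh ek) M2 = Some (tren S v2)) by (rewrite star_sh, E2; reflexivity).
      destruct (S2' _ SV2) as [CV IV].
      set (K1 := tlam (tapp (tapp (tvar 0) (tren S v2)) (tren S K))).
      assert (HK1 : chk G sK K1 = true).
      { simpl. rewrite CV, chk_shift, HKK. first [reflexivity | apply orb_r; simpl; auto]. }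
      destruct (T1 K1 HK1) as [C1 I1]. split; auto.
      eapply ccvj_trans. apply I1. unfold K1. simpl kinv. simpl fillctx. simpl invQ.
      rewrite chk_shift, KW0. rewrite kinv_St by auto.
      apply ccvj_sym.
      eapply ccvj_trans. apply fill_cong. apply ccv_appL. rewrite is_value_ren; auto.
      eapply ccvj_trans. apply fill_where.
      apply ccvj_JWhere; [|constructor]. apply fill_cong. simpl. apply ccv_App. constructor.
      apply ccv_sym. rewrite (proj1 ren_o_ren_o). apply IV.
    +
      assert (SV1 : star (sh eo) (sh ek) M1 = Some (tren S v1)) by (rewrite star_sh, E1; reflexivity).
      destruct (S1' _ SV1) as [CV IV].
      set (K1 := tlam (tapp (tapp (tren S v1) (tvar 0)) (tren S K))).
      assert (HK1 : chk G sK K1 = true).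
      { simpl. rewrite CV, chk_shift, HKK. first [reflexivity | apply orb_r; simpl; auto]. }
      destruct (T2 K1 HK1) as [C1 I1]. split; auto.
      eapply ccvj_trans. apply I1. unfold K1. simpl kinv. simpl fillctx. simpl invQ.
      rewrite chk_shift, KW0. rewrite kinv_St by auto.
      apply ccvj_sym.
      eapply ccvj_trans. apply fill_cong. apply ccv_appR. rewrite is_value_ren; auto. rewrite is_value_ren; auto.
      eapply ccvj_trans. apply fill_where.
      apply ccvj_JWhere; [|constructor]. apply fill_cong. simpl. apply ccv_App; [|constructor].
      apply ccv_sym. rewrite (proj1 ren_o_ren_o). apply IV.
    +
      destruct (S1 v1 E1) as [CV1 IV1]. destruct (S2 v2 E2) as [CV2 IV2].
      simpl. rewrite KW0, CV1, CV2, HKK. split. reflexivity.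
      apply fill_cong. apply ccv_App; auto.
  - intros L IHL N IHN G eo ek xo xk HO HK. split; [|intros v Hv; discriminate].
    intros K HKK.
    destruct (proj1 (IHL _ _ _ _ _ (EnvO_cons _ _ _ HO) (EnvK_sht _ _ _ HK)) (tren S K)) as [C1 I1].
    rewrite chk_shift; auto.
    destruct (proj1 (IHN _ _ _ _ _ HO HK) (tlam (tr (scons (tvar 0) (sh eo)) (sh ek) L (tren S K)))) as [C2 I2].
    simpl; auto.
    simpl. split; auto.
    eapply ccvj_trans. apply I2. simpl kinv. simpl fillctx.
    eapply ccvj_trans. apply ccvj_JWhere. apply I1. constructor.
    rewrite kinv_St by auto. apply ccvj_sym. apply fill_where.
  - intros J IH G eo ek xo xk HO HK. split; [|intros v Hv; discriminate].
    intros K HKK.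
    destruct (IH _ _ _ _ _ (EnvO_shf _ _ _ HO) (EnvK_cons _ _ _ HK)) as [C1 I1].
    simpl. rewrite (chk_WK _ _ HKK), C1, HKK. rewrite Bool.andb_false_r. split; auto.
    apply fill_cong. apply ccv_Mu. auto.
  - intros k N IH G eo ek xo xk HO HK.
    destruct (HK k) as [m [A [B C]]]. simpl. rewrite A.
    destruct (proj1 (IH _ _ _ _ _ HO HK) (tvar m)) as [C1 I1]. simpl; rewrite B; auto.
    split; auto. eapply ccvj_trans. apply I1. simpl. rewrite C. constructor.
  - intros J IHJ N IHN G eo ek xo xk HO HK.
    destruct (IHJ _ _ _ _ _ (EnvO_cons _ _ _ HO) (EnvK_sht _ _ _ HK)) as [C1 I1].
    destruct (proj1 (IHN _ _ _ _ _ HO HK) (tlam (trj (scons (tvar 0) (sh eo)) (sh ek) J))) as [C2 I2].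
    simpl; auto.
    simpl. split; auto. eapply ccvj_trans. apply I2. simpl. apply ccvj_JWhere; auto. constructor.
Qed.

Lemma cntW_SS G m : cntW G (S (S m)) = (if G 0 then 1 else 0) + (if G 1 then 1 else 0) + cntW (fun i => G (S (S i))) m.
Proof. simpl. lia. Qed.
Lemma cntK_SS G m : cntK G (S (S m)) = (if G 0 then 0 else 1) + (if G 1 then 0 else 1) + cntK (fun i => G (S (S i))) m.
Proof. simpl. lia. Qed.
Lemma even_shift2 : (fun i => Nat.even (S (S i))) = Nat.even.
Proof. fext. reflexivity. Qed.

Lemma cntW_even n : cntW Nat.even (2 * n) = n.
Proof. induction n; auto. replace (2 * S n) with (S (S (2 * n))) by lia. rewrite cntW_SS, even_shift2, IHn.
  simpl. lia. Qed.

Lemma cntK_even n : cntK Nat.even (2 * n + 1) = n.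
Proof. induction n; auto. replace (2 * S n + 1) with (S (S (2 * n + 1))) by lia. rewrite cntK_SS, even_shift2, IHn.
  simpl. lia. Qed.

Lemma even_2n n : Nat.even (2 * n) = true.
Proof. induction n; auto. replace (2 * S n) with (S (S (2 * n))) by lia. auto. Qed.
Lemma even_2n1 n : Nat.even (2 * n + 1) = false.
Proof. induction n; auto. replace (2 * S n + 1) with (S (S (2 * n + 1))) by lia. auto. Qed.

Lemma cps_lemma M : chk Nat.even sT (cps M) = true /\ ccv_eq (invT Nat.even (cps M)) M.
Proof.
  assert (HO : EnvO (scons false Nat.even) (sh (fun n => tvar (2 * n))) (fun n => n)).
  { intros n. exists (S (2 * n)). unfold sh. split. reflexivity. split. apply even_2n.
    change (cntW (scons false Nat.even) (S (2 * n))) with (0 + cntW Nat.even (2 * n)). apply cntW_even. }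
  assert (HK : EnvK (scons false Nat.even) (sh (fun n => tvar (2 * n + 1))) S).
  { intros n. exists (S (2 * n + 1)). unfold sh. split. reflexivity. split. apply even_2n1.
    change (cntK (scons false Nat.even) (S (2 * n + 1))) with (1 + cntK Nat.even (2 * n + 1)). rewrite cntK_even. reflexivity. }
  destruct (proj1 (proj1 cps_inv M _ _ _ _ _ HO HK) (tvar 0) eq_refl) as [C I].
  unfold cps. simpl chk. split; auto. simpl invT.
  eapply ccv_trans. apply ccv_Mu. apply I. simpl. rewrite (proj1 ren_o_id). apply ccv_mueta.
Qed.

Theorem corollary1p32 (M1 M2 : term) :
  beta_eta (cps M1) (cps M2) -> ccv_eq M1 M2.
Proof.
  intros H. destruct (be_join _ _ H) as [w [A B]].
  destruct (cps_lemma M1) as [C1 I1]. destruct (cps_lemma M2) as [C2 I2].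
  destruct (red_sound _ _ A _ C1) as [_ R1]. destruct (red_sound _ _ B _ C2) as [_ R2].
  eapply ccv_trans. apply ccv_sym. apply I1.
  eapply ccv_trans. apply R1.
  eapply ccv_trans. apply ccv_sym. apply R2. apply I2.
Qed.
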